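(* Let $X$ be a topological space in which every open set is a union of countably many clopen sets. Then $X$ is a QN space if, and only if, for every Borel function $\Psi:X\to\mathbb{N}^{\mathbb{N}}$, $\Psi[X]$ is bounded.
   Context: For a metric space $Y$, $f:X\to Y$ is a quasi-normal limit of $f_n:X\to Y$ if there are positive reals $\epsilon_n\to0$ such that for each $x\in X$, $d(f_n(x),f(x))<\epsilon_n$ for all but finitely many $n$. $X$ is a QN space if whenever a sequence of continuous real-valued functions on $X$ converges pointwise to $0$, it converges to $0$ quasi-normally. $\Psi:X\to\mathbb{N}^{\mathbb{N}}$ is Borel if preimages of open sets are Borel. $Y\subseteq\mathbb{N}^{\mathbb{N}}$ is bounded if there is $g\in\mathbb{N}^{\mathbb{N}}$ such that each $f\in Y$ satisfies $f(n)\le g(n)$ for all but finitely many $n$. *)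

(* Defs.v *)
From Stdlib Require Import Reals Rtopology Arith.
Open Scope R_scope.

Record Topology (X : Type) : Type := {
  open : (X -> Prop) -> Prop;
  open_full : open (fun _ => True);
  open_union : forall F : (X -> Prop) -> Prop,
      (forall U, F U -> open U) -> open (fun x => exists U, F U /\ U x);
  open_inter : forall U V, open U -> open V -> open (fun x => U x /\ V x)
}.
Arguments open {X} _ _.

Definition closed {X : Type} (T : Topology X) (A : X -> Prop) : Prop :=
  open T (fun x => ~ A x).

Definition clopen {X : Type} (T : Topology X) (A : X -> Prop) : Prop :=
  open T A /\ closed T A.

Definition open_countable_union_of_clopen {X : Type} (T : Topology X) : Prop :=
  forall U, open T U ->
    exists C : nat -> (X -> Prop),
      (forall n, clopen T (C n)) /\ (forall x, U x <-> exists n, C n x).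

Definition continuous_real {X : Type} (T : Topology X) (f : X -> R) : Prop :=
  forall V : R -> Prop, open_set V -> open T (fun x => V (f x)).

Definition qn_converges {X : Type} (fn : nat -> X -> R) (f : X -> R) : Prop :=
  exists eps : nat -> R,
    (forall n, 0 < eps n) /\ Un_cv eps 0 /\
    (forall x, exists N, forall n, (N <= n)%nat -> Rabs (fn n x - f x) < eps n).

Definition QN_space {X : Type} (T : Topology X) : Prop :=
  forall fn : nat -> X -> R,
    (forall n, continuous_real T (fn n)) ->
    (forall x, Un_cv (fun n => fn n x) 0) ->
    qn_converges fn (fun _ => 0).

Definition sigma_algebra {X : Type} (S : (X -> Prop) -> Prop) : Prop :=
  (forall A, S A -> S (fun x => ~ A x)) /\
  (forall A : nat -> (X -> Prop), (forall n, S (A n)) ->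
      S (fun x => exists n, A n x)).

Definition Borel {X : Type} (T : Topology X) (A : X -> Prop) : Prop :=
  forall S : (X -> Prop) -> Prop,
    sigma_algebra S -> (forall U, open T U -> S U) -> S A.

(* Baire space N^N with the product topology (N discrete). *)
Definition baire_open (U : (nat -> nat) -> Prop) : Prop :=
  forall f, U f -> exists n, forall g, (forall k, (k < n)%nat -> g k = f k) -> U g.

Definition Borel_function {X : Type} (T : Topology X) (Psi : X -> (nat -> nat)) : Prop :=
  forall U, baire_open U -> Borel T (fun x => U (Psi x)).

Definition bounded_baire (Y : (nat -> nat) -> Prop) : Prop :=
  exists g : nat -> nat, forall f, Y f -> exists N, forall n, (N <= n)%nat -> (f n <= g n)%nat.

Definition image_of {X : Type} (Psi : X -> (nat -> nat)) : (nat -> nat) -> Prop :=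
  fun f => exists x, Psi x = f.

(* Main.v *)
Require Import Defs.
From Stdlib Require Import Reals Rtopology Arith Lia Lra Classical ClassicalEpsilon FunctionalExtensionality PropExtensionality.
Open Scope R_scope.

Definition bP (P : Prop) : bool := if excluded_middle_informative P then true else false.
Lemma bP_true P : bP P = true <-> P.
Proof. unfold bP; destruct (excluded_middle_informative P); split; intros; auto; try discriminate; contradiction. Qed.

Definition lc {X Y : Type} (T : Topology X) (f : X -> Y) : Prop :=
  forall x, exists U, open T U /\ U x /\ forall y, U y -> f y = f x.

Lemma set_ext {X : Type} (A B : X -> Prop) : (forall x, A x <-> B x) -> A = B.
Proof. intros H; apply functional_extensionality; intros x; apply propositional_extensionality; auto. Qed.

Lemma lc_const {X Y : Type} (T : Topology X) (c : Y) : lc T (fun _ : X => c).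
Proof. intros x; exists (fun _ => True); split; [apply open_full| split; auto]. Qed.

Lemma lc_ext {X Y : Type} (T : Topology X) (f g : X -> Y) : (forall x, f x = g x) -> lc T g -> lc T f.
Proof. intros E H x; destruct (H x) as [U [HU [Ux HU']]]; exists U; repeat split; auto; intros y Uy; rewrite !E; auto. Qed.

Lemma lc_op {X Y1 Y2 Z : Type} (T : Topology X) (f : X -> Y1) (g : X -> Y2) (h : Y1 -> Y2 -> Z) :
  lc T f -> lc T g -> lc T (fun x => h (f x) (g x)).
Proof. intros Hf Hg x; destruct (Hf x) as [U [HU [Ux HU']]]; destruct (Hg x) as [V [HV [Vx HV']]].
 exists (fun y => U y /\ V y); split; [apply open_inter; auto | split; [auto|]].
 intros y [Uy Vy]; rewrite HU', HV'; auto. Qed.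

Lemma lc_comp {X Y Z : Type} (T : Topology X) (f : X -> Y) (h : Y -> Z) : lc T f -> lc T (fun x => h (f x)).
Proof. intros Hf x; destruct (Hf x) as [U [HU [Ux HU']]]; exists U; split; auto; split; auto.
 intros y Uy; rewrite HU'; auto. Qed.

Lemma lc_clopen {X : Type} (T : Topology X) (C : X -> Prop) : clopen T C -> lc T (fun x => bP (C x)).
Proof. intros [HO HC] x. unfold bP. destruct (classic (C x)) as [Cx|nCx].
 - exists C; split; auto; split; auto; intros y Cy.
   destruct (excluded_middle_informative (C y)), (excluded_middle_informative (C x)); try reflexivity; tauto.
 - exists (fun y => ~ C y); split; auto; split; auto; intros y Cy.
   destruct (excluded_middle_informative (C y)), (excluded_middle_informative (C x)); try reflexivity; tauto.
Qed.

Lemma open_ext {X : Type} (T : Topology X) (A B : X -> Prop) : (forall x, A x <-> B x) -> open T B -> open T A.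
Proof. intros E H; rewrite (set_ext A B E); auto. Qed.

Lemma lc_cont {X : Type} (T : Topology X) (f : X -> R) : lc T f -> continuous_real T f.
Proof. intros H V _.
 apply open_ext with (B := fun x => exists U, (open T U /\ forall y, U y -> V (f y)) /\ U x).
 - intros x; split.
   + intros Vx; destruct (H x) as [U [HU [Ux HU']]]; exists U; split; [split|]; auto. intros y Uy; rewrite HU'; auto.
   + intros [U [[_ HU] Ux]]; auto.
 - apply (open_union X T (fun U => open T U /\ forall y, U y -> V (f y))). intros U [HU _]; auto.
Qed.

Fixpoint bex (p : nat -> bool) (j : nat) : bool := match j with 0%nat => false | S j => bex p j || p j end.
Lemma bex_spec p j : bex p j = true <-> exists i, (i < j)%nat /\ p i = true.
Proof. induction j; simpl. split; [discriminate| intros [i [H _]]; lia].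
 rewrite Bool.orb_true_iff, IHj. split.
 - intros [[i [H1 H2]]|H]; [exists i; split; auto; lia| exists j; split; auto].
 - intros [i [H1 H2]]. destruct (Nat.eq_dec i j); [subst; right; auto| left; exists i; split; auto; lia]. Qed.
Lemma lc_bex {X : Type} (T : Topology X) (p : X -> nat -> bool) j :
  (forall i, lc T (fun x => p x i)) -> lc T (fun x => bex (p x) j).
Proof. intros H; induction j; simpl. apply lc_const.
 apply (lc_op T (fun x => bex (p x) j) (fun x => p x j) orb); auto. Qed.

Fixpoint rmaxf (p : nat -> R) (j : nat) : R := match j with 0%nat => 0 | S j => Rmax (rmaxf p j) (p j) end.
Lemma rmaxf_ge p j i : (i < j)%nat -> p i <= rmaxf p j.
Proof. induction j; simpl; intros; [lia|]. destruct (Nat.eq_dec i j); [subst; apply Rmax_r|].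
 eapply Rle_trans; [apply IHj; lia| apply Rmax_l]. Qed.
Lemma rmaxf_nonneg p j : 0 <= rmaxf p j.
Proof. induction j; simpl; [lra|]. eapply Rle_trans; [apply IHj|apply Rmax_l]. Qed.
Lemma rmaxf_lt p j e : 0 < e -> (forall i, (i<j)%nat -> p i < e) -> rmaxf p j < e.
Proof. induction j; simpl; intros; auto. apply Rmax_lub_lt; auto. Qed.
Lemma lc_rmaxf {X : Type} (T : Topology X) (p : X -> nat -> R) j :
  (forall i, lc T (fun x => p x i)) -> lc T (fun x => rmaxf (p x) j).
Proof. intros H; induction j; simpl. apply lc_const.
 apply (lc_op T (fun x => rmaxf (p x) j) (fun x => p x j) Rmax); auto. Qed.

Lemma fin_eventually (Q : nat -> nat -> Prop) : (forall i, exists m, forall n, (m <= n)%nat -> Q i n) ->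
  forall N, exists M, forall i n, (i < N)%nat -> (M <= n)%nat -> Q i n.
Proof. intros H N; induction N. exists 0%nat; intros; lia.
 destruct IHN as [M HM]; destruct (H N) as [m Hm]; exists (max M m); intros i n Hi Hn.
 destruct (Nat.eq_dec i N); [subst; apply Hm; lia| apply HM; lia]. Qed.

Lemma stable {A : Type} (f : nat -> A) a : (forall n, (a <= n)%nat -> f n = f (S n)) ->
  forall n m, (a <= n)%nat -> (n <= m)%nat -> f m = f n.
Proof. intros H n m Hn Hm; induction Hm; auto. rewrite <- (H m) by lia; auto. Qed.

Lemma small_inv e : 0 < e -> exists K, / INR (S K) < e.
Proof. intros He. destruct (INR_archimed e 1 He) as [n Hn]. exists n.
 assert (H0 : 0 < INR (S n)) by (apply lt_0_INR; lia).
 assert (H1 : INR n <= INR (S n)) by (apply le_INR; lia).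
 apply (Rmult_lt_reg_l (INR (S n))); auto. rewrite Rinv_r by lra. nra. Qed.

Lemma inv_pos k : 0 < / INR (S k).
Proof. apply Rinv_0_lt_compat, lt_0_INR; lia. Qed.
Lemma inv_mono i K : (K <= i)%nat -> / INR (S i) <= / INR (S K).
Proof. intros; apply Rinv_le_contravar; [apply lt_0_INR; lia| apply le_INR; lia]. Qed.
Lemma core {X : Type} (T : Topology X) (e : nat -> nat -> X -> bool) :
  QN_space T -> (forall i n, lc T (e i n)) ->
  (forall x i, exists m, forall n, (m <= n)%nat -> e i n x = false) ->
  exists t : nat -> nat, (forall i, (i <= t i)%nat) /\
    forall x, exists N, forall i n, (N <= i)%nat -> (t i <= n)%nat -> e i n x = false.
Proof.
 intros HQ Hlc Hev.
 set (term := fun n x i => if e i n x then / INR (S i) else 0).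
 set (phi := fun n x => rmaxf (term n x) (S n)).
 assert (Hc : forall n, continuous_real T (phi n)).
 { intros n. apply lc_cont. unfold phi. apply lc_rmaxf. intros i. unfold term.
   apply (lc_comp T (e i n) (fun b => if b then / INR (S i) else 0)). apply Hlc. }
 assert (Hcv0 : forall x, Un_cv (fun n => phi n x) 0).
 { intros x e0 He0. destruct (small_inv e0 He0) as [K HK].
   destruct (fin_eventually (fun i n => e i n x = false) (fun i => Hev x i) (S K)) as [M HM].
   exists M; intros n Hn. unfold R_dist; rewrite Rminus_0_r. unfold phi.
   rewrite Rabs_pos_eq by apply rmaxf_nonneg.
   apply rmaxf_lt; auto. intros i Hi. unfold term. destruct (le_lt_dec i K).
   + rewrite HM by lia. lra.
   + destruct (e i n x). eapply Rle_lt_trans; [|exact HK]. apply inv_mono; lia. lra. }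
 destruct (HQ phi Hc Hcv0) as [eps [Hpos [Hcv Hb]]].
 assert (Ht : forall i, {m | (i <= m)%nat /\ forall n, (m <= n)%nat -> eps n < / INR (S i)}).
 { intros i. apply constructive_indefinite_description.
   destruct (Hcv (/ INR (S i)) (inv_pos i)) as [N HN].
   exists (max N i). split; [lia|]. intros n Hn. specialize (HN n ltac:(lia)). unfold R_dist in HN.
   rewrite Rminus_0_r in HN. eapply Rle_lt_trans; [apply Rle_abs|exact HN]. }
 exists (fun i => proj1_sig (Ht i)). split. { intros i; destruct (proj2_sig (Ht i)); auto. }
 intros x. destruct (Hb x) as [N HN]. exists N. intros i n Hi Hn.
 destruct (proj2_sig (Ht i)) as [H1 H2].
 specialize (H2 n Hn). specialize (HN n ltac:(lia)). cbv beta in HN. rewrite Rminus_0_r in HN.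
 destruct (e i n x) eqn:E; auto. exfalso.
 assert (H : term n x i <= phi n x) by (apply rmaxf_ge; lia).
 unfold term in H; rewrite E in H. unfold phi in HN, H. rewrite Rabs_pos_eq in HN by apply rmaxf_nonneg. lra.
Qed.
Definition good {X : Type} (T : Topology X) (A : X -> Prop) : Prop :=
  exists D : nat -> X -> bool, (forall n, lc T (D n)) /\
    forall x, exists N, forall n, (N <= n)%nat -> (D n x = true <-> A x).

Lemma good_open {X : Type} (T : Topology X) (HX : open_countable_union_of_clopen T) U :
  open T U -> good T U.
Proof. intros HU. destruct (HX U HU) as [C [HC HCU]].
 exists (fun n x => bex (fun i => bP (C i x)) (S n)). split.
 - intros n. apply (lc_bex T (fun x i => bP (C i x))). intros i; apply lc_clopen; auto.
 - intros x. destruct (classic (U x)) as [Ux|nUx].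
   + destruct (proj1 (HCU x) Ux) as [i Ci]. exists i. intros n Hn. split; auto. intros _.
     apply bex_spec. exists i; split; [lia|]. apply bP_true; auto.
   + exists 0%nat. intros n _. split; [|tauto]. intros H. apply bex_spec in H.
     destruct H as [i [_ Hi]]. apply (proj1 (bP_true _)) in Hi. exfalso; apply nUx, HCU; eauto.
Qed.

Lemma good_compl {X : Type} (T : Topology X) A : good T A -> good T (fun x => ~ A x).
Proof. intros [D [HD HA]]. exists (fun n x => negb (D n x)). split.
 - intros n; apply (lc_comp T (D n) negb); auto.
 - intros x; destruct (HA x) as [N HN]; exists N; intros n Hn; specialize (HN n Hn).
   destruct (D n x); simpl; split; intros; try discriminate; try tauto.
   destruct (classic (A x)); [|tauto]. apply HN in H0; discriminate.
Qed.

Lemma bool_iff (a b : bool) (P : Prop) : (a = true <-> P) -> (b = true <-> P) -> a = b.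
Proof. destruct a, b; intuition; symmetry; auto. Qed.

Lemma good_union {X : Type} (T : Topology X) (HQ : QN_space T) (A : nat -> X -> Prop) :
  (forall i, good T (A i)) -> good T (fun x => exists i, A i x).
Proof. intros HA.
 assert (HD : forall i, {D : nat -> X -> bool | (forall n, lc T (D n)) /\
    forall x, exists N, forall n, (N <= n)%nat -> (D n x = true <-> A i x)}).
 { intros i; apply constructive_indefinite_description; apply HA. }
 set (DD := fun i => proj1_sig (HD i)).
 assert (HDl : forall i n, lc T (DD i n)) by (intros i; exact (proj1 (proj2_sig (HD i)))).
 assert (HDc : forall i x, exists N, forall n, (N <= n)%nat -> (DD i n x = true <-> A i x))
   by (intros i; exact (proj2 (proj2_sig (HD i)))).
 clearbody DD.
 destruct (core T (fun i n x => negb (Bool.eqb (DD i n x) (DD i (S n) x))) HQ) as [t [Ht1 Ht2]].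
 { intros i n. apply (lc_op T (DD i n) (DD i (S n)) (fun a b => negb (Bool.eqb a b))); auto. }
 { intros x i. destruct (HDc i x) as [N HN]. exists N; intros n Hn.
   rewrite (bool_iff (DD i n x) (DD i (S n) x) (A i x)); auto. destruct (DD i (S n) x); auto. }
 exists (fun n x => bex (fun i => andb (t i <=? n)%nat (DD i n x)) (S n)). split.
 - intros n. apply (lc_bex T (fun x i => andb (t i <=? n)%nat (DD i n x))). intros i.
   apply (lc_comp T (DD i n) (fun b => andb (t i <=? n)%nat b)); auto.
 - intros x. destruct (classic (exists i, A i x)) as [[i Ai]|nA].
   + destruct (HDc i x) as [Ni HNi]. exists (max Ni (t i)). intros n Hn.
     split; [intros; eauto|]. intros _. apply bex_spec. exists i. split; [specialize (Ht1 i); lia|].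
     apply andb_true_intro; split; [apply Nat.leb_le; lia|]. apply HNi; [lia|auto].
   + destruct (Ht2 x) as [N0 HN0].
     destruct (fin_eventually (fun i n => DD i n x = false)) with (N := N0) as [M HM].
     { intros i. destruct (HDc i x) as [Ni HNi]. exists Ni. intros n Hn.
       destruct (DD i n x) eqn:E; auto. exfalso; apply nA. exists i. apply (HNi n Hn); auto. }
     exists M. intros n Hn. split; [|tauto]. intros H. apply bex_spec in H.
     destruct H as [i [Hi H]]. apply andb_prop in H. destruct H as [H1 H2]. apply Nat.leb_le in H1.
     exfalso. destruct (le_lt_dec N0 i) as [Hle|Hlt].
     * destruct (HDc i x) as [Ni HNi].
       assert (Hs : forall m, (t i <= m)%nat -> DD i m x = DD i (S m) x).
       { intros m Hm. specialize (HN0 i m Hle Hm). destruct (DD i m x), (DD i (S m) x); auto; discriminate. }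
       pose proof (stable (fun m => DD i m x) (t i) Hs n (max n Ni) H1 ltac:(lia)) as Hst. simpl in Hst.
       assert (DD i (max n Ni) x = false).
       { destruct (DD i (max n Ni) x) eqn:E; auto. exfalso; apply nA; exists i. apply (HNi (max n Ni)); [lia|auto]. }
       congruence.
     * rewrite HM in H2 by lia. discriminate.
Qed.

Lemma borel_good {X : Type} (T : Topology X) (HX : open_countable_union_of_clopen T) (HQ : QN_space T) A :
  Borel T A -> good T A.
Proof. intros HB. apply HB. split. apply good_compl. apply good_union; auto.
 intros U HU; apply good_open; auto. Qed.
Fixpoint fst0 (p : nat -> bool) (j : nat) : nat :=
  match j with 0%nat => 0%nat
  | S j' => if (fst0 p j' <? j')%nat then fst0 p j' else if p j' then j' else S j' end.

Lemma fst0_none p j : (forall i, (i < j)%nat -> p i = false) -> fst0 p j = j.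
Proof. induction j; simpl; intros H; auto. rewrite IHj by (intros; apply H; lia).
 rewrite Nat.ltb_irrefl, H by lia. auto. Qed.

Lemma fst0_some p j m : p m = true -> (forall i, (i < m)%nat -> p i = false) -> (m < j)%nat -> fst0 p j = m.
Proof. intros Hm Hi; induction j; intros Hj; [lia|]. simpl.
 destruct (Nat.eq_dec m j).
 - subst. rewrite fst0_none by auto. rewrite Nat.ltb_irrefl, Hm. auto.
 - rewrite IHj by lia. assert (Hl : (m <? j)%nat = true) by (apply Nat.ltb_lt; lia). rewrite Hl; auto.
Qed.

Lemma lc_fst0 {X : Type} (T : Topology X) (p : X -> nat -> bool) j :
  (forall i, lc T (fun x => p x i)) -> lc T (fun x => fst0 (p x) j).
Proof. intros H; induction j; simpl. apply lc_const.
 apply (lc_op T (fun x => fst0 (p x) j) (fun x => p x j)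
   (fun r b => if (r <? j)%nat then r else if b then j else S j)); auto. Qed.

Lemma forward {X : Type} (T : Topology X) (HX : open_countable_union_of_clopen T) (HQ : QN_space T)
  (Psi : X -> nat -> nat) : Borel_function T Psi -> bounded_baire (image_of Psi).
Proof. intros HPsi.
 assert (HD : forall k m, {D : nat -> X -> bool | (forall n, lc T (D n)) /\
    forall x, exists N, forall n, (N <= n)%nat -> (D n x = true <-> Psi x k = m)}).
 { intros k m; apply constructive_indefinite_description.
   apply borel_good; auto. apply (HPsi (fun f => f k = m)).
   intros f Hf. exists (S k). intros g Hg. rewrite Hg; auto. }
 set (DD := fun k m => proj1_sig (HD k m)).
 assert (HDl : forall k m n, lc T (DD k m n)) by (intros k m; exact (proj1 (proj2_sig (HD k m)))).
 assert (HDc : forall k m x, exists N, forall n, (N <= n)%nat -> (DD k m n x = true <-> Psi x k = m))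
   by (intros k m; exact (proj2 (proj2_sig (HD k m)))).
 clearbody DD.
 set (F := fun k n x => fst0 (fun m => DD k m n x) (S n)).
 assert (HFl : forall k n, lc T (F k n)).
 { intros k n. apply (lc_fst0 T (fun x m => DD k m n x)). intros i; apply HDl. }
 assert (HFe : forall x k, exists M, forall n, (M <= n)%nat -> F k n x = Psi x k).
 { intros x k. destruct (fin_eventually (fun m n => DD k m n x = true <-> Psi x k = m))
     with (N := S (Psi x k)) as [M HM].
   { intros m; destruct (HDc k m x) as [N HN]; exists N; auto. }
   exists (max M (Psi x k)). intros n Hn. unfold F. apply fst0_some.
   - apply HM; [lia|lia|auto].
   - intros i Hi. destruct (DD k i n x) eqn:E; auto. apply HM in E; [lia|lia|lia].
   - lia. }
 destruct (core T (fun k n x => orb (negb (F k n x =? F k (S n) x)%nat) (n <? F k n x)%nat) HQ)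
   as [t [Ht1 Ht2]].
 { intros k n. apply (lc_op T (F k n) (F k (S n)) (fun a b => orb (negb (a =? b)%nat) (n <? a)%nat)); auto. }
 { intros x k. destruct (HFe x k) as [M HM]. exists (max M (Psi x k)). intros n Hn.
   rewrite !HM by lia. rewrite Nat.eqb_refl. simpl. apply Nat.ltb_ge. lia. }
 exists t. intros f [x <-]. destruct (Ht2 x) as [N HN]. exists N. intros k Hk.
 destruct (HFe x k) as [M HM].
 assert (Hs : forall m, (t k <= m)%nat -> F k m x = F k (S m) x).
 { intros m Hm. specialize (HN k m Hk Hm). apply Bool.orb_false_iff in HN. destruct HN as [H1 _].
   apply Nat.eqb_eq. destruct (F k m x =? F k (S m) x)%nat; auto. }
 pose proof (stable (fun m => F k m x) (t k) Hs (t k) (max M (t k)) ltac:(lia) ltac:(lia)) as Hst.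
 simpl in Hst. rewrite HM in Hst by lia.
 specialize (HN k (t k) Hk ltac:(lia)). apply Bool.orb_false_iff in HN. destruct HN as [_ H2].
 apply Nat.ltb_ge in H2. lia.
Qed.
Lemma Borel_ext {X : Type} (T : Topology X) (A B : X -> Prop) : (forall x, A x <-> B x) -> Borel T B -> Borel T A.
Proof. intros E H; rewrite (set_ext A B E); auto. Qed.
Lemma Borel_open {X : Type} (T : Topology X) U : open T U -> Borel T U.
Proof. intros HU S _ HS; auto. Qed.
Lemma Borel_compl {X : Type} (T : Topology X) A : Borel T A -> Borel T (fun x => ~ A x).
Proof. intros HA S [H1 H2] HS. apply H1. apply HA; [split|]; auto. Qed.
Lemma Borel_cunion {X : Type} (T : Topology X) (A : nat -> X -> Prop) :
  (forall n, Borel T (A n)) -> Borel T (fun x => exists n, A n x).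
Proof. intros HA S [H1 H2] HS. apply H2. intros n; apply HA; [split|]; auto. Qed.
Lemma Borel_full {X : Type} (T : Topology X) : Borel T (fun _ => True).
Proof. apply Borel_open, open_full. Qed.
Lemma Borel_empty {X : Type} (T : Topology X) : Borel T (fun _ => False).
Proof. apply Borel_ext with (B := fun x => ~ True); [tauto|]. apply Borel_compl, Borel_full. Qed.
Lemma Borel_cinter {X : Type} (T : Topology X) (A : nat -> X -> Prop) :
  (forall n, Borel T (A n)) -> Borel T (fun x => forall n, A n x).
Proof. intros HA. apply Borel_ext with (B := fun x => ~ exists n, ~ A n x).
 - intros x; split. intros H [n Hn]; auto. intros H n. apply NNPP; intros Hn; apply H; eauto.
 - apply Borel_compl, Borel_cunion. intros n; apply Borel_compl; auto. Qed.
Lemma Borel_inter {X : Type} (T : Topology X) (A B : X -> Prop) :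
  Borel T A -> Borel T B -> Borel T (fun x => A x /\ B x).
Proof. intros HA HB. apply Borel_ext with (B := fun x => forall n : nat, match n with 0%nat => A x | _ => B x end).
 - intros x; split. intros [H1 H2] [|n]; auto. intros H; split; [apply (H 0%nat)|apply (H 1%nat)].
 - apply Borel_cinter. intros [|n]; auto. Qed.

Definition upd (f : nat -> nat) (n a : nat) : nat -> nat := fun k => if (k =? n)%nat then a else f k.

Lemma fd {X : Type} (T : Topology X) (Psi : X -> nat -> nat)
  (HB : forall k a, Borel T (fun x => Psi x k = a)) :
  forall n (Q : (nat -> nat) -> Prop), (forall f g, (forall j, (j < n)%nat -> f j = g j) -> Q f -> Q g) ->
  Borel T (fun x => Q (Psi x)).
Proof. induction n; intros Q HQ.
 - destruct (classic (Q (fun _ => 0%nat))) as [H|H].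
   + apply Borel_ext with (B := fun _ => True); [|apply Borel_full].
     intros x; split; auto. intros _. apply (HQ (fun _ => 0%nat)); auto. intros; lia.
   + apply Borel_ext with (B := fun _ => False); [|apply Borel_empty].
     intros x; split; [|tauto]. intros Hx; apply H. apply (HQ (Psi x)); auto; intros; lia.
 - apply Borel_ext with (B := fun x => exists a, Psi x n = a /\ Q (upd (Psi x) n a)).
   + intros x; split.
     * intros Hx. exists (Psi x n). split; auto. apply (HQ (Psi x)); auto.
       intros j _. unfold upd. destruct (Nat.eqb_spec j n); subst; auto.
     * intros [a [Ha Hq]]. apply (HQ (upd (Psi x) n a)); auto.
       intros j _. unfold upd. destruct (Nat.eqb_spec j n); subst; auto.
   + apply Borel_cunion. intros a. apply Borel_inter; auto.
     apply (IHn (fun f => Q (upd f n a))). intros f g Hfg Hq. apply (HQ (upd f n a)); auto.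
     intros j Hj. unfold upd. destruct (Nat.eqb_spec j n); auto. apply Hfg; lia.
Qed.

Lemma Borel_fun_of {X : Type} (T : Topology X) (Psi : X -> nat -> nat)
  (HB : forall k a, Borel T (fun x => Psi x k = a)) : Borel_function T Psi.
Proof. intros U HU.
 apply Borel_ext with (B := fun x => exists n, forall g, (forall j, (j < n)%nat -> g j = Psi x j) -> U g).
 - intros x; split. intros H. destruct (HU _ H) as [n Hn]. exists n; auto.
   intros [n Hn]. apply Hn; auto.
 - apply Borel_cunion. intros n.
   apply (fd T Psi HB n (fun f => forall g, (forall j, (j < n)%nat -> g j = f j) -> U g)).
   intros f f' Hff' Hf g Hg. apply Hf. intros j Hj. rewrite Hg, Hff'; auto.
Qed.

Lemma least_ex (P : nat -> Prop) : (exists n, P n) -> exists n, P n /\ forall m, P m -> (n <= m)%nat.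
Proof. intros [n Hn]. revert Hn. induction n as [n IH] using lt_wf_ind. intros Hn.
 destruct (classic (exists m, (m < n)%nat /\ P m)) as [[m [Hm Pm]]|Hno].
 - exact (IH m Hm Pm).
 - exists n; split; auto. intros m Pm. destruct (le_lt_dec n m); auto. exfalso; apply Hno; eauto.
Qed.

Lemma open_abs_lt c : open_set (fun y => Rabs y < c).
Proof. intros x Hx. assert (Hp : 0 < c - Rabs x) by lra.
 exists (mkposreal _ Hp). intros y Hy. unfold disc in Hy; simpl in Hy.
 pose proof (Rabs_triang (y - x) x) as Ht. replace (y - x + x) with y in Ht by ring. lra. Qed.
Fixpoint GG (g : nat -> nat) (k : nat) : nat :=
  match k with 0%nat => g 0%nat | S k' => S (max (GG g k') (g (S k'))) end.
Lemma GG_ge g k : (g k <= GG g k)%nat.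
Proof. destruct k; simpl; lia. Qed.
Lemma GG_incr g k : (GG g k < GG g (S k))%nat.
Proof. simpl; lia. Qed.

Fixpoint kk (G : nat -> nat) (n : nat) : nat :=
  match n with 0%nat => 0%nat | S n' => if (G (S (kk G n')) <=? S n')%nat then S (kk G n') else kk G n' end.

Lemma kk_S G n : kk G (S n) = if (G (S (kk G n)) <=? S n)%nat then S (kk G n) else kk G n.
Proof. reflexivity. Qed.

Lemma kk_I1 g n : (n < GG g (S (kk (GG g) n)))%nat.
Proof. induction n. simpl; lia. rewrite kk_S.
 destruct (Nat.leb_spec (GG g (S (kk (GG g) n))) (S n)).
 - pose proof (GG_incr g (S (kk (GG g) n))). lia.
 - lia. Qed.
Lemma kk_I2 g n : kk (GG g) n = 0%nat \/ (GG g (kk (GG g) n) <= n)%nat.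
Proof. induction n; auto. rewrite kk_S.
 destruct (Nat.leb_spec (GG g (S (kk (GG g) n))) (S n)); auto. destruct IHn; [left|right]; lia. Qed.
Lemma kk_mono g n m : (n <= m)%nat -> (kk (GG g) n <= kk (GG g) m)%nat.
Proof. induction 1; auto. rewrite kk_S. destruct (Nat.leb_spec (GG g (S (kk (GG g) m))) (S m)); lia. Qed.
Lemma kk_unb g K : exists N, (K <= kk (GG g) N)%nat.
Proof. induction K. exists 0%nat; lia.
 destruct IHK as [N HN]. exists (max N (GG g (S K))).
 pose proof (kk_mono g N (max N (GG g (S K))) ltac:(lia)).
 destruct (le_lt_dec (S K) (kk (GG g) (max N (GG g (S K))))); auto.
 assert (E : kk (GG g) (max N (GG g (S K))) = K) by lia.
 pose proof (kk_I1 g (max N (GG g (S K)))). rewrite E in H0. lia. Qed.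

Lemma backward {X : Type} (T : Topology X)
  (H : forall Psi : X -> (nat -> nat), Borel_function T Psi -> bounded_baire (image_of Psi)) :
  QN_space T.
Proof. intros fn Hcont Hcv.
 set (Pk := fun x k N => forall j, Rabs (fn (N + j)%nat x) < / INR (S k)).
 assert (HE : forall x k, exists N, Pk x k N /\ forall m, Pk x k m -> (N <= m)%nat).
 { intros x k. apply least_ex. destruct (Hcv x (/ INR (S k)) (inv_pos k)) as [N HN].
   exists N. intros j. specialize (HN (N + j)%nat ltac:(lia)). unfold R_dist in HN.
   rewrite Rminus_0_r in HN; auto. }
 set (Psi := fun x k => proj1_sig (constructive_indefinite_description _ (HE x k))).
 assert (HPs : forall x k, Pk x k (Psi x k) /\ forall m, Pk x k m -> (Psi x k <= m)%nat).
 { intros x k; exact (proj2_sig (constructive_indefinite_description _ (HE x k))). }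
 clearbody Psi.
 assert (HPkB : forall k a, Borel T (fun x => Pk x k a)).
 { intros k a. apply Borel_cinter. intros j. apply Borel_open.
   apply (Hcont (a + j)%nat (fun y => Rabs y < / INR (S k))). apply open_abs_lt. }
 assert (HB : forall k a, Borel T (fun x => Psi x k = a)).
 { intros k a. apply Borel_ext with (B := fun x => Pk x k a /\ forall m, (m < a)%nat -> ~ Pk x k m).
   - intros x; destruct (HPs x k) as [Hq1 H2]; split.
     + intros <-. split; auto. intros m Hm Hp. specialize (H2 m Hp). lia.
     + intros [Ha Hm]. specialize (H2 a Ha). destruct (Nat.eq_dec (Psi x k) a); auto.
       exfalso. apply (Hm (Psi x k)); auto. lia.
   - apply Borel_inter; auto. apply Borel_cinter. intros m.
     destruct (lt_dec m a).
     + apply Borel_ext with (B := fun x => ~ Pk x k m); [tauto|]. apply Borel_compl; auto.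
     + apply Borel_ext with (B := fun _ => True); [tauto|apply Borel_full]. }
 destruct (H Psi (Borel_fun_of T Psi HB)) as [g Hg].
 set (eps := fun n => / INR (S (kk (GG g) n))).
 exists eps. split; [|split].
 - intros n; apply inv_pos.
 - intros e He. destruct (small_inv e He) as [K HK]. destruct (kk_unb g K) as [N HN].
   exists N. intros n Hn. unfold R_dist, eps. rewrite Rminus_0_r, Rabs_pos_eq by (left; apply inv_pos).
   eapply Rle_lt_trans; [|exact HK]. apply inv_mono. pose proof (kk_mono g N n ltac:(lia)); lia.
 - intros x. destruct (Hg (Psi x) (ex_intro _ x eq_refl)) as [K0 HK0].
   destruct (kk_unb g K0) as [N1 HN1]. exists (max N1 (GG g 0%nat)). intros n Hn.
   set (k := kk (GG g) n).
   assert (Hk : (K0 <= k)%nat) by (pose proof (kk_mono g N1 n ltac:(lia)); unfold k; lia).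
   assert (HG : (GG g k <= n)%nat) by (destruct (kk_I2 g n) as [E|E]; unfold k; [rewrite E; lia| auto]).
   pose proof (HK0 k Hk). pose proof (GG_ge g k).
   destruct (HPs x k) as [Hz _]. specialize (Hz (n - Psi x k)%nat).
   replace (Psi x k + (n - Psi x k))%nat with n in Hz by lia.
   cbv beta. rewrite Rminus_0_r. exact Hz.
Qed.

Theorem mainTheorem7 (X : Type) (T : Topology X)
  (HX : open_countable_union_of_clopen T) :
  QN_space T <->
  (forall Psi : X -> (nat -> nat), Borel_function T Psi -> bounded_baire (image_of Psi)).
Proof. split. intros HQ Psi HPsi; apply (forward T); auto. apply backward. Qed.
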